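(* Let $\alpha$ be a divergence, $E$ and $F$ Polish spaces, and $\mu,\nu\in\mathcal P(E)$ with $\nu\ll\mu$. Suppose a measurable map $T:E\to F$ is sufficient for $\{\mu,\nu\}$, meaning that $d\nu/d\mu$ (has a version that) is $\sigma(T)$-measurable. Then $\alpha(\nu\circ T^{-1}\,|\,\mu\circ T^{-1})=\alpha(\nu|\mu)$. In particular this holds if $T$ is a bijection with measurable inverse.
   Context: For a Polish space $E$, $\mathcal P(E)$ is the set of Borel probability measures on $E$. A kernel from $E$ to $F$ is a measurable map $E\ni x\mapsto K_x\in\mathcal P(F)$, and $\mu K:=\int_E\mu(dx)K_x(\cdot)\in\mathcal P(F)$. A divergence is a family of functions $\mathcal P(E)\ni\nu\mapsto\alpha(\nu|\mu)\in[0,\infty]$, one for each Polish space $E$ and each $\mu\in\mathcal P(E)$, each convex and lower semicontinuous with respect to total variation, such that: (1) $\alpha(\mu|\mu)=0$; (2) $\alpha(\nu|\mu)=\infty$ if $\nu$ is not absolutely continuous with respect to $\mu$; (3) $\alpha(\nu K|\mu K)\le\alpha(\nu|\mu)$ for all Polish $E,F$, all $\mu,\nu\in\mathcal P(E)$ and every kernel $K$ from $E$ to $F$. *)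

(* Defs.v *)
From HB Require Import structures.
From mathcomp Require Import all_boot all_order all_algebra.
From mathcomp Require Import all_classical all_reals all_analysis.
From mathcomp Require Import measurable_realfun.

Set Implicit Arguments.
Unset Strict Implicit.
Unset Printing Implicit Defensive.

Import Order.TTheory GRing.Theory Num.Theory.
Local Open Scope classical_set_scope.
Local Open Scope ring_scope.

Definition is_polish {R : realType} {d : measure_display} (T : measurableType d) : Prop :=
  exists dist : T -> T -> R,
    [/\ (forall x y, 0 <= dist x y) /\ (forall x y, dist x y = 0 <-> x = y),
        (forall x y, dist x y = dist y x) /\
        (forall x y z, dist x z <= dist x y + dist y z),
        (forall u : nat -> T,
            (forall e : R, 0 < e -> exists N, forall m n, (N <= m)%N -> (N <= n)%N ->
                dist (u m) (u n) < e) ->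
            exists l, forall e : R, 0 < e -> exists N, forall n, (N <= n)%N ->
                dist (u n) l < e),
        (exists D : set T, countable D /\
            forall x (e : R), 0 < e -> exists2 y, D y & dist x y < e) &
        (@measurable d T =
           <<s [set U : set T | forall x, U x ->
                  exists2 e : R, 0 < e & [set y | dist x y < e] `<=` U] >>)].

Local Open Scope ereal_scope.

(* The type of a candidate divergence: one function P(E) x P(E) -> [0, oo]
   for every measurable space E; only its values on Polish spaces matter.
   [alpha nu mu] stands for alpha(nu | mu). *)
Definition divergence_fun (R : realType) :=
  forall (d : measure_display) (T : measurableType d),
    probability T R -> probability T R -> \bar R.

Definition is_comp_kernel {R : realType} {d d' : measure_display}
  {E : measurableType d} {F : measurableType d'}
  (mu : probability E R) (K : R.-pker E ~> F) (rho : probability F R) : Prop :=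
  forall B, measurable B -> rho B = \int[mu]_x K x B.

Definition is_image_measure {R : realType} {d d' : measure_display}
  {E : measurableType d} {F : measurableType d'}
  (mu : probability E R) (T : E -> F) (rho : probability F R) : Prop :=
  forall B, measurable B -> rho B = mu (T @^-1` B).

Definition is_divergence {R : realType} (alpha : divergence_fun R) : Prop :=
  (forall d (E : measurableType d), @is_polish R d E -> forall (mu : probability E R),
    [/\
        (forall nu : probability E R, 0 <= alpha d E nu mu),
        (forall (t : R) (nu1 nu2 nu : probability E R), (0 <= t <= 1)%R ->
           (forall A, measurable A -> nu A = t%:E * nu1 A + (1 - t)%:E * nu2 A) ->
           alpha d E nu mu <= t%:E * alpha d E nu1 mu + (1 - t)%:E * alpha d E nu2 mu),
        (forall (nu : probability E R) (a : R), a%:E < alpha d E nu mu ->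
           exists2 delta : R, (0 < delta)%R & forall nu' : probability E R,
             (forall A, measurable A -> `|nu' A - nu A| < delta%:E) ->
             a%:E < alpha d E nu' mu),
        alpha d E mu mu = 0 &
        (forall nu : probability E R, ~ (nu `<< mu) -> alpha d E nu mu = +oo)]) /\
  (forall d d' (E : measurableType d) (F : measurableType d'),
     @is_polish R d E -> @is_polish R d' F ->
     forall (mu nu : probability E R) (K : R.-pker E ~> F)
            (muK nuK : probability F R),
     is_comp_kernel mu K muK -> is_comp_kernel nu K nuK ->
     alpha d' F nuK muK <= alpha d E nu mu).

Definition sufficient {R : realType} {d d' : measure_display}
  {E : measurableType d} {F : measurableType d'}
  (T : E -> F) (mu nu : probability E R) : Prop :=
  exists g : E -> \bar R,
    [/\ (forall x, 0 <= g x),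
        (forall B : set (\bar R), measurable B ->
           exists2 C : set F, measurable C & g @^-1` B = T @^-1` C) &
        (forall A, measurable A -> nu A = \int[mu]_(x in A) g x)].

(* Main.v *)
Require Import Defs.
From HB Require Import structures.
From mathcomp Require Import all_boot all_order all_algebra.
From mathcomp Require Import all_classical all_reals all_analysis.
From mathcomp Require Import measurable_realfun.
From mathcomp Require Import lra.
Set Implicit Arguments.
Unset Strict Implicit.
Unset Printing Implicit Defensive.
Import Order.TTheory GRing.Theory Num.Theory.
Local Open Scope classical_set_scope.
Local Open Scope ring_scope.
Local Open Scope ereal_scope.


Definition ppart {d'} {F : measurableType d'} (n : nat) (D : nat -> set F) :=
  [/\ (forall k, measurable (D k)), (forall y, exists2 k, (k < n)%N & D k y)
   & (forall i j y, D i y -> D j y -> i = j)].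

Section pkernel.
Context d d' (E : measurableType d) (F : measurableType d') (R : realType).
Variables (n : nat) (D : nat -> set F) (Q : nat -> probability E R).

Definition pidx (y : F) : nat := xget 0%N [set k | D k y].

Lemma pidxE (H : ppart n D) k y : D k y -> pidx y = k.
Proof.
case: H => _ _ Hd Dk; rewrite /pidx.
have := xgetPex 0%N (ex_intro _ k Dk : exists k, [set k | D k y] k).
by move=> /= Dx; exact: Hd Dx Dk.
Qed.

Definition pk (H : ppart n D) (y : F) : {measure set E -> \bar R} := Q (pidx y).

Lemma pk_sum (H : ppart n D) y U :
  pk H y U = \sum_(k < n) (\1_(D k) y)%:E * Q k U.
Proof.
have [k kn Dk] := (let: And3 _ c _ := H in c) y.
rewrite /pk (pidxE H Dk) (bigD1 (Ordinal kn)) //= indicE mem_set // mul1e.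
rewrite big1 ?adde0 // => i /eqP ik.
rewrite indicE memNset ?mul0e //= => Di; apply: ik; apply: val_inj => /=.
by case: H => _ _ Hd; exact: Hd Di Dk.
Qed.

Lemma measurable_pk (H : ppart n D) U : measurable U ->
  measurable_fun [set: F] (pk H ^~ U).
Proof.
move=> mU.
rewrite (_ : pk H ^~ U = fun y => \sum_(k < n) (\1_(D k) y)%:E * Q k U);
  last by apply/funext => y; exact: pk_sum.
apply: emeasurable_sum => k.
apply: emeasurable_funM; last exact: measurable_cst.
apply/measurable_EFinP; apply: measurable_indic.
by case: H.
Qed.

HB.instance Definition _ (H : ppart n D) :=
  isKernel.Build _ _ _ _ _ (pk H) (measurable_pk H).

Lemma pk_prob (H : ppart n D) y : pk H y [set: E] = 1.
Proof. exact: probability_setT. Qed.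

HB.instance Definition _ (H : ppart n D) :=
  Kernel_isProbability.Build _ _ _ _ _ (pk H) (pk_prob H).

End pkernel.

Section pmix.
Context d d' (E : measurableType d) (F : measurableType d') (R : realType).
Variables (n : nat) (D : nat -> set F) (Q : nat -> probability E R).

Definition pmix (H : ppart n D) (P : probability F R) : set E -> \bar R :=
  msum (fun k => mscale (NngNum (fine_ge0 (measure_ge0 P (D k)))) (Q k)) n.

HB.instance Definition _ (H : ppart n D) P := Measure.on (pmix H P).

Lemma pmixE (H : ppart n D) P U :
  pmix H P U = \sum_(k < n) P (D k) * Q k U.
Proof.
rewrite /pmix /msum /=; apply: eq_bigr => k _ /=.
rewrite /mscale /= fineK // fin_num_measure //; case: H => //.
Qed.

Lemma pmix_setT (H : ppart n D) P : pmix H P [set: E] = 1.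
Proof.
rewrite pmixE.
under eq_bigr do rewrite probability_setT mule1.
have [mD cov disj] := H.
have -> : \sum_(k < n) P (D k) = P (\big[setU/set0]_(k < n) D k).
  pose D' k := if (k < n)%N then D k else set0.
  have -> : \big[setU/set0]_(k < n) D k = \big[setU/set0]_(k < n) D' k.
    by apply: eq_bigr => k _; rewrite /D' ltn_ord.
  rewrite measure_bigsetU.
  - by apply: eq_bigr => k _; rewrite /D' ltn_ord.
  - by move=> k; rewrite /D'; case: ifP.
  - apply/trivIsetP => i j _ _ ij; apply/seteqP; split=> // y [].
    rewrite /D'; case: ifP => _; case: ifP => _ // Di Dj.
    by rewrite (disj _ _ _ Di Dj) eqxx in ij.
have -> : \big[setU/set0]_(k < n) D k = [set: F].
  apply/seteqP; split=> // y _; have [k kn Dk] := cov y.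
  by rewrite -bigcup_mkord; exists k.
exact: probability_setT.
Qed.

HB.instance Definition _ (H : ppart n D) P :=
  Measure_isProbability.Build _ _ _ (pmix H P) (pmix_setT H P).

Lemma comp_pk (H : ppart n D) (P : probability F R) B : measurable B ->
  pmix H P B = \int[P]_y pk Q H y B.
Proof.
move=> mB; rewrite pmixE.
under eq_integral do rewrite pk_sum.
have [mD _ _] := H.
rewrite ge0_integral_sum //; last first.
- by move=> k y _; rewrite mule_ge0 // lee_fin.
- move=> k; apply: emeasurable_funM; last exact: measurable_cst.
  by apply/measurable_EFinP; apply: measurable_indic.
apply: eq_bigr => k _.
under eq_integral do rewrite muleC.
rewrite ge0_integralZl //.
- by rewrite integral_indic // setIT muleC.
- by apply/measurable_EFinP; apply: measurable_indic.
Qed.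

End pmix.


Lemma dp_mix (R : realType) (alpha : divergence_fun R) d d'
  (E : measurableType d) (F : measurableType d') :
  is_divergence alpha -> @is_polish R d E -> @is_polish R d' F ->
  forall (mu : probability E R) (muT nuT : probability F R) n D
    (Q : nat -> probability E R) (H : ppart n D),
  (forall U, measurable U -> mu U = pmix Q H muT U) ->
  alpha d E (pmix Q H nuT) mu <= alpha d' F nuT muT.
Proof.
move=> [_ dp] pE pF mu muT nuT n D Q H hmu.
apply: (dp _ _ _ _ pF pE muT nuT (pk Q H) mu (pmix Q H nuT)).
- by move=> B mB; rewrite hmu //; exact: comp_pk.
- by move=> B mB; exact: comp_pk.
Qed.

Lemma dp_fun (R : realType) (alpha : divergence_fun R) d d'
  (E : measurableType d) (F : measurableType d') :
  is_divergence alpha -> @is_polish R d E -> @is_polish R d' F ->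
  forall (mu nu : probability E R) (muT nuT : probability F R) (T : E -> F),
  measurable_fun [set: E] T ->
  is_image_measure mu T muT -> is_image_measure nu T nuT ->
  alpha d' F nuT muT <= alpha d E nu mu.
Proof.
move=> [_ dp] pE pF mu nu muT nuT T mT hmu hnu.
have key (P : probability E R) (PT : probability F R) :
    is_image_measure P T PT -> is_comp_kernel P (kdirac mT) PT.
  move=> hP B mB; rewrite hP //.
  under eq_integral do rewrite /kdirac /= diracE.
  rewrite (_ : (fun x => _) = fun x => (\1_(T @^-1` B) x)%:E); last first.
    by apply/funext => x; rewrite indicE.
  rewrite integral_indic ?setIT //.
  by rewrite -[X in measurable X]setTI; exact: mT.
exact: (dp _ _ _ _ pE pF mu nu (kdirac mT) muT nuT (key _ _ hmu) (key _ _ hnu)).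
Qed.


Lemma two_le1F (R : realFieldType) : ~ ((2 : R) <= 1)%R.
Proof. lra. Qed.

Section termlemmas.
Local Open Scope ring_scope.
Lemma term_bound (R : realFieldType) (m q x v w lo eps : R) : 0 <= m -> 0 <= q -> m * q = x -> lo * m <= v -> v <= (lo + eps) * m -> lo * x <= w -> w <= (lo+eps) * x -> 0 <= lo -> 0 <= eps -> `|v * q - w| <= eps * x.
Proof.
move=> m0 q0 mqx h1 h2 h3 h4 lo0 e0.
have a1 : lo * x <= v * q by rewrite -mqx mulrA ler_wpM2r.
have a2 : v * q <= (lo + eps) * x by rewrite -mqx mulrA ler_wpM2r.
rewrite ler_norml; apply/andP; split; nra.
Qed.
Lemma term_top (R : realFieldType) (q v w : R) : 0 <= q -> q <= 1 -> 0 <= v -> 0 <= w -> w <= v -> `|v*q - w| <= v.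
Proof.
move=> q0 q1 v0 w0 wv.
have a1 : v * q <= v by rewrite ler_piMr.
have a2 : 0 <= v * q by rewrite mulr_ge0.
rewrite ler_norml; apply/andP; split; lra.
Qed.
End termlemmas.

Section approx.
Context (R : realType) d d' (E : measurableType d) (F : measurableType d').
Variables (mu nu : probability E R) (T : E -> F) (g : E -> \bar R).
Hypothesis mT : measurable_fun [set: E] T.
Hypothesis g0 : forall x, 0 <= g x.
Hypothesis gsuf : forall B : set (\bar R), measurable B ->
  exists2 C : set F, measurable C & g @^-1` B = T @^-1` C.
Hypothesis gdens : forall A, measurable A -> nu A = \int[mu]_(x in A) g x.
Hypothesis numu : nu `<< mu.

Lemma mTpre C : measurable C -> measurable (T @^-1` C).
Proof. by move=> mC; rewrite -[X in measurable X]setTI; exact: mT. Qed.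

Lemma mgpre B : measurable B -> measurable (g @^-1` B).
Proof. by move=> mB; have [C mC ->] := gsuf mB; exact: mTpre. Qed.

Lemma mg : measurable_fun [set: E] g.
Proof. by move=> _ B mB; rewrite setTI; exact: mgpre. Qed.

Lemma nu_ge B (a : R) : measurable B -> (0 <= a)%R ->
  (forall x, B x -> a%:E <= g x) -> a%:E * mu B <= nu B.
Proof.
move=> mB a0 ha; rewrite gdens // -integral_cst //.
apply: (ge0_le_integral mu mB).
- by move=> x _; rewrite /cst lee_fin.
- exact: measurable_cst.
- exact: measurable_funS mg.
- by move=> x Bx; exact: ha.
Qed.

Lemma nu_le B (b : R) : measurable B ->
  (forall x, B x -> g x <= b%:E) -> nu B <= b%:E * mu B.
Proof.
move=> mB hb; rewrite gdens // -integral_cst //.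
apply: (ge0_le_integral mu mB).
- by move=> x _; exact: g0.
- exact: measurable_funS mg.
- exact: measurable_cst.
- by move=> x Bx; exact: hb.
Qed.

Definition Binf := g @^-1` [set +oo].

Lemma mBinf : measurable Binf.
Proof. exact/mgpre/emeasurable_set1. Qed.

Lemma mu_Binf : mu Binf = 0.
Proof.
have fin : mu Binf \is a fin_num by rewrite fin_num_measure //; exact: mBinf.
rewrite -(fineK fin); set r := fine (mu Binf).
have r0 : (0 <= r)%R by rewrite fine_ge0.
have [->//|rpos] := eqVneq r 0%R.
have {}rpos : (0 < r)%R by rewrite lt_neqAle eq_sym rpos.
have h2 : (0 <= 2 / r)%R by rewrite divr_ge0 // ltW.
have H : forall x, Binf x -> (2 / r)%:E <= g x by move=> x ->; exact: leey.
have := nu_ge mBinf h2 H.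
rewrite -(fineK fin) -/r -EFinM mulrAC -mulrA divff ?gt_eqF // mulr1.
move=> h; have := le_trans h (probability_le1 nu mBinf).
by rewrite lee_fin => /two_le1F.
Qed.

Lemma nu_Binf : nu Binf = 0.
Proof.
have := numu; rewrite null_content_dominatesP => /(_ _ mBinf mu_Binf).
done.
Qed.

Definition Fge (a : R) := g @^-1` [set z | a%:E <= z].

Lemma mFge a : measurable (Fge a).
Proof.
apply: mgpre.
rewrite (_ : [set z | a%:E <= z] = [set` Interval (BLeft a%:E) (BInfty _ false)]).
  exact: emeasurable_itv.
by apply/seteqP; split => z /=; rewrite in_itv /= andbT.
Qed.

Lemma tail (eps eta : R) : (0 < eps)%R -> (0 < eta)%R ->
  exists N : nat, nu (Fge (N%:R * eps)) < eta%:E.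
Proof.
move=> e0 t0.
pose Fm (m : nat) := Fge (m%:R * eps).
have mF m : measurable (Fm m) by exact: mFge.
have capE : \bigcap_m Fm m = Binf.
  apply/seteqP; split => x /=.
    move=> hx; rewrite /Binf /preimage /=.
    destruct (g x) as [r| |] eqn:Egx => //.
      have := hx (Num.truncn (r / eps)).+1 I; rewrite /Fm /Fge /= Egx lee_fin.
      rewrite -ler_pdivlMr // => h; have := truncnS_gt (r / eps).
      by rewrite ltNge h.
    by have := g0 x; rewrite Egx.
  by move=> hx m _; rewrite /Fm /Fge /preimage /= (hx : g x = +oo) leey.
have nonincr : nonincreasing_seq Fm.
  move=> m m' mm'; apply/asboolP => x; rewrite /Fm /Fge /= => h; apply: le_trans h.
  by rewrite lee_fin ler_pM2r // ler_nat.
have mcap : measurable (\bigcap_m Fm m) by rewrite capE; exact: mBinf.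
have F0fin : nu (Fm 0%N) < +oo.
  by apply: le_lt_trans (probability_le1 nu (mF 0%N)) _; exact: ltry.
have := @nonincreasing_cvg_mu _ _ _ nu Fm F0fin mF mcap nonincr.
rewrite capE => hc.
have : (nu \o Fm) x @[x --> \oo] --> 0%:E.
  have e : (nu \o Fm) x @[x --> \oo] --> nu Binf := hc.
  by rewrite nu_Binf in e.
rewrite fine_cvgP => -[finF cvgF].
have := cvgr_lt 0%R cvgF eta t0.
move=> hnear.
have [N1 _ H1] := hnear; have [N2 _ H2] := finF.
exists (maxn N1 N2).
have h1 := H1 (maxn N1 N2) (leq_maxl _ _).
have h2 : nu (Fge ((maxn N1 N2)%:R * eps)) \is a fin_num := H2 (maxn N1 N2) (leq_maxr _ _).
have h1' : (fine (nu (Fge ((maxn N1 N2)%:R * eps))) < eta)%R := h1.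
by rewrite -(fineK h2) lte_fin.
Qed.

Section cells.
Variables (eps : R) (N : nat).
Hypothesis eps0 : (0 < eps)%R.

Definition Gc (k : nat) : set (\bar R) :=
  if (k < N)%N then [set z | (k%:R * eps)%:E <= z < (k.+1%:R * eps)%:E]
  else if k == N then [set z | (N%:R * eps)%:E <= z] else set0.

Definition Pk k := g @^-1` Gc k.

Lemma mGc k : measurable (Gc k).
Proof.
rewrite /Gc; case: ifP => _.
  rewrite (_ : [set z | _ <= z < _] =
     [set` Interval (BLeft (k%:R * eps)%:E) (BLeft (k.+1%:R * eps)%:E)]).
    exact: emeasurable_itv.
  by apply/seteqP; split => z /=; rewrite in_itv.
case: ifP => _ //.
rewrite (_ : [set z | _ <= z] = [set` Interval (BLeft (N%:R * eps)%:E) (BInfty _ false)]).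
  exact: emeasurable_itv.
by apply/seteqP; split => z /=; rewrite in_itv /= andbT.
Qed.

Lemma mPk k : measurable (Pk k).
Proof. exact/mgpre/mGc. Qed.

Lemma Gc_lb j z : Gc j z -> (j <= N)%N /\ (j%:R * eps)%:E <= z.
Proof.
rewrite /Gc; case: ifP => jN.
  by move=> /andP[h _]; split => //; exact: ltnW.
by case: ifP => // /eqP -> h; split.
Qed.

Lemma Gc_ub i z : Gc i z -> (i < N)%N -> z < (i.+1%:R * eps)%:E.
Proof. by rewrite /Gc => + iN; rewrite iN => /andP[]. Qed.

Lemma Pk_disj i j x : Pk i x -> Pk j x -> i = j.
Proof.
rewrite /Pk /preimage /=.
wlog ij : i j / (i < j)%N.
  move=> W hi hj; case: (ltngtP i j) => [ij|ji|//].
  - exact: W hi hj.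
  - by apply/esym; exact: W hj hi.
move=> hi hj; exfalso.
have [jN lj] := Gc_lb hj.
have ui := Gc_ub hi (leq_trans ij jN).
have : ((j%:R * eps)%:E < (i.+1%:R * eps)%:E) by exact: le_lt_trans lj ui.
by rewrite lte_fin ltr_pM2r // ltr_nat ltnS leqNgt ij.
Qed.

Lemma Pk_cov x : exists2 k, (k < N.+1)%N & Pk k x.
Proof.
rewrite /Pk /Gc /preimage /=.
have [hN|hN] := leP (N%:R * eps)%:E (g x).
  by exists N => //; rewrite ltnn eqxx.
have gfin : g x \is a fin_num.
  by rewrite ge0_fin_numE ?g0 //; exact: lt_trans hN (ltry _).
set r := fine (g x); have gxE : g x = r%:E by rewrite fineK.
have r0 : (0 <= r)%R by rewrite fine_ge0 ?g0.
set k := Num.truncn (r / eps).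
have kr : (k%:R <= r / eps)%R by rewrite truncn_le divr_ge0 // ltW.
have rk : (r / eps < k.+1%:R)%R by exact: truncnS_gt.
have kN : (k < N)%N.
  rewrite -(ltr_nat R) (le_lt_trans kr) // ltr_pdivrMr //.
  by move: hN; rewrite gxE lte_fin.
exists k; first by rewrite ltnS ltnW.
rewrite kN gxE /= lee_fin lte_fin.
by rewrite -ler_pdivlMr // kr -ltr_pdivrMr // rk.
Qed.

Section Dcells.
Variable C : nat -> set F.
Hypothesis mC : forall k, measurable (C k).
Hypothesis PkC : forall k, Pk k = T @^-1` C k.

Definition notC k := [set y | forall j, (j < k)%N -> ~ C j y].

Definition Dc k := if (k < N)%N then C k `&` notC k
  else if k == N then notC N else set0.

Lemma mnotC k : measurable (notC k).
Proof.
rewrite (_ : notC k = ~` \bigcup_(j in [set j | (j < k)%N]) C j).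
  by apply: measurableC; apply: bigcup_measurable => j _; exact: mC.
apply/seteqP; split => y /=.
  by move=> h [j /= jk Cj]; exact: h jk Cj.
by move=> h j jk Cj; apply: h; exists j.
Qed.

Lemma CT j x : C j (T x) <-> Pk j x.
Proof. by rewrite PkC. Qed.

Lemma Dc_ppart : ppart N.+1 Dc.
Proof.
split.
- move=> k; rewrite /Dc; case: ifP => _.
    by apply: measurableI; [exact: mC|exact: mnotC].
  by case: ifP => _ //; exact: mnotC.
- move=> y.
  have [[j [jN Cj]]|no] := pselect (exists j, (j < N)%N /\ C j y).
    have exP : exists j, (j < N)%N && `[< C j y >].
      by exists j; rewrite jN; apply/asboolP.
    case: (ex_minnP exP) => k /andP[kN /asboolP Ck] kmin.
    exists k; first by rewrite ltnS ltnW.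
    rewrite /Dc kN; split => // l lk Cl.
    have : (k <= l)%N.
      by apply: kmin; rewrite (ltn_trans lk kN); apply/asboolP.
    by rewrite leqNgt lk.
  exists N => //; rewrite /Dc ltnn eqxx => l lN Cl.
  by apply: no; exists l.
- move=> i j y; rewrite /Dc.
  have info k : (if (k < N)%N then C k `&` notC k
    else if k == N then notC N else set0) y ->
    (k <= N)%N /\ ((k < N)%N -> C k y) /\ notC k y.
    case: ifP => kN; first by move=> [Ck nk]; split => //; exact: ltnW.
    by case: ifP => // /eqP -> h; split => //; split => //; rewrite ltnn.
  move=> /info [iN [Ci ni]] /info [jN [Cj nj]].
  case: (ltngtP i j) => // [ij|ji]; exfalso.
  + by apply: (nj i ij); apply: Ci; exact: leq_trans ij jN.
  + by apply: (ni j ji); apply: Cj; exact: leq_trans ji iN.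
Qed.

Lemma TDc k : T @^-1` Dc k = Pk k.
Proof.
apply/seteqP; split => x; rewrite /Dc /preimage /=.
- case: ifP => kN.
    by move=> [Ck _]; exact/CT.
  case: ifP => // /eqP -> nC.
  have [j jN Pj] := Pk_cov x.
  move: jN; rewrite ltnS leq_eqVlt => /orP[/eqP jE|jN]; first by rewrite -jE.
  by exfalso; apply: (nC j jN); exact/CT.
- move=> Pkx.
  have [kN _] := Gc_lb Pkx.
  have nC : forall j, (j < k)%N -> ~ C j (T x).
    move=> j jk /CT Pj; have := Pk_disj Pj Pkx => jE.
    by move: jk; rewrite jE ltnn.
  case: ifP => kN'; first by split => //; exact/CT.
  have -> : k = N by apply/eqP; rewrite eqn_leq kN leqNgt kN'.
  by rewrite eqxx => j jN; apply: nC; move: jN; rewrite (_ : k = N) //; apply/eqP; rewrite eqn_leq kN leqNgt kN'.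
Qed.

End Dcells.

Definition Qk k : probability E R := mnormalize (mrestr mu (mPk k)) mu.

Lemma finmu (P : probability E R) X : measurable X -> P X \is a fin_num.
Proof. by move=> mX; rewrite fin_num_measure. Qed.

Lemma QkE k U : measurable U -> mu (Pk k) * Qk k U = mu (U `&` Pk k).
Proof.
move=> mU; rewrite /Qk /= /mnormalize /= /mrestr /= setTI.
have fP := finmu mu (mPk k).
have fUP := finmu mu (measurableI _ _ mU (mPk k)).
case: ifPn.
  move=> /orP[/eqP h0|/eqP hoo]; last by move: fP; rewrite hoo.
  rewrite h0 mul0e; apply/esym/eqP; rewrite eq_le measure_ge0 andbT -h0.
  by apply: le_measure; rewrite ?inE //; [exact: measurableI _ _ mU (mPk k)|exact: mPk].
rewrite negb_or => /andP[h0 _].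
rewrite -(fineK fP) -(fineK fUP) -!EFinM; congr EFin.
rewrite mulrCA divff ?mulr1 //.
by apply: contra h0 => /eqP h; rewrite -(fineK fP) h.
Qed.

Lemma mix_sum (m : {measure set E -> \bar R}) U : measurable U ->
  \sum_(k < N.+1) m (U `&` Pk k) = m U.
Proof.
move=> mU.
have Pk0 k : (N < k)%N -> Pk k = set0.
  move=> Nk; rewrite /Pk /Gc ltnNge (ltnW Nk) /= gtn_eqF //.
have := @measure_bigsetU _ _ _ m (fun k => U `&` Pk k) _ _ N.+1.
move=> <- //.
- congr (m _); apply/seteqP; split => [x|x Ux].
    by rewrite -(bigcup_mkord _ (fun k => U `&` Pk k)) => -[k _ []].
  have [k kN Pkx] := Pk_cov x.
  by rewrite -(bigcup_mkord _ (fun k => U `&` Pk k)); exists k.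
- by move=> k; apply: measurableI => //; exact: mPk.
- apply/trivIsetP => i j _ _ ij; apply/seteqP; split => // x [[_ Pi] [_ Pj]].
  by rewrite (Pk_disj Pi Pj) eqxx in ij.
Qed.

Lemma nu_geR B (a : R) : measurable B -> (0 <= a)%R ->
  (forall x, B x -> a%:E <= g x) -> (a * fine (mu B) <= fine (nu B))%R.
Proof.
move=> mB a0 ha; rewrite -lee_fin EFinM !fineK ?finmu //; exact: nu_ge.
Qed.

Lemma nu_leR B (b : R) : measurable B ->
  (forall x, B x -> g x <= b%:E) -> (fine (nu B) <= b * fine (mu B))%R.
Proof.
move=> mB hb; rewrite -lee_fin EFinM !fineK ?finmu //; exact: nu_le.
Qed.

Lemma cells_mu C (mC : forall k, measurable (C k))
  (PkC : forall k, Pk k = T @^-1` C k) (muT : probability F R) :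
  is_image_measure mu T muT ->
  forall U, measurable U -> mu U = pmix Qk (Dc_ppart mC) muT U.
Proof.
move=> hm U mU; rewrite pmixE.
have [mD _ _] := Dc_ppart mC.
rewrite -[LHS](mix_sum mu mU); apply: eq_bigr => k _.
by rewrite hm // (TDc PkC) QkE.
Qed.

Lemma cells_nu C (mC : forall k, measurable (C k))
  (PkC : forall k, Pk k = T @^-1` C k) (nuT : probability F R) :
  is_image_measure nu T nuT ->
  forall A, measurable A ->
  `|pmix Qk (Dc_ppart mC) nuT A - nu A| <= (eps + fine (nu (Pk N)))%:E.
Proof.
move=> hn A mA; rewrite pmixE.
have [mD _ _] := Dc_ppart mC.
have mAP k : measurable (A `&` Pk k) by apply: measurableI => //; exact: mPk.
pose v k := fine (nu (Pk k)); pose q k := fine (Qk k A).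
pose w k := fine (nu (A `&` Pk k)); pose x k := fine (mu (A `&` Pk k)).
pose m k := fine (mu (Pk k)).
have e1 : \sum_(k < N.+1) nuT (Dc C k) * Qk k A = (\sum_(k < N.+1) v k * q k)%:E.
  rewrite -sumEFin; apply: eq_bigr => k _.
  by rewrite hn // (TDc PkC) EFinM /v /q !fineK ?finmu //; exact: mPk.
have e2 : nu A = (\sum_(k < N.+1) w k)%:E.
  rewrite -(mix_sum nu mA) -sumEFin; apply: eq_bigr => k _.
  by rewrite /w fineK ?finmu.
have e3 : fine (mu A) = (\sum_(k < N.+1) x k)%R.
  have h : (\sum_(k < N.+1) (x k)%:E) = \sum_(k < N.+1) mu (A `&` Pk k).
    by apply: eq_bigr => k _; rewrite /x fineK ?finmu.
  by rewrite sumEFin mix_sum // in h; rewrite -h.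
rewrite e1 e2 -EFinB abse_EFin lee_fin -sumrB.
apply: le_trans (ler_norm_sum _ _ _) _.
pose c k := if (k < N)%N then (eps * x k)%R else v k.
apply: (@le_trans _ _ (\sum_(k < N.+1) c k)%R).
  apply: ler_sum => k _; rewrite /c.
  have q0 : (0 <= q k)%R by rewrite fine_ge0.
  have v0 : (0 <= v k)%R by rewrite fine_ge0.
  have w0 : (0 <= w k)%R by rewrite fine_ge0.
  case: ifPn => kN.
    have hk : (k.+1%:R * eps = k%:R * eps + eps)%R by rewrite -natr1 mulrDl mul1r.
    have lb X : measurable X -> X `<=` Pk k -> ((k%:R * eps) * fine (mu X) <= fine (nu X))%R.
      move=> mX XP; apply: nu_geR => //; first by rewrite mulr_ge0 // ltW.
      by move=> y /XP /Gc_lb [].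
    have ub X : measurable X -> X `<=` Pk k -> (fine (nu X) <= (k%:R * eps + eps) * fine (mu X))%R.
      move=> mX XP; apply: nu_leR => // y /XP Py; rewrite -hk.
      exact: ltW (Gc_ub Py kN).
    apply: (@term_bound _ (m k) (q k) (x k) (v k) (w k) (k%:R * eps) eps) => //.
    - by rewrite fine_ge0.
    - rewrite /m /q /x -fineM ?finmu //; last exact: mPk.
      by rewrite QkE.
    - exact: lb (mPk k) (fun _ h => h).
    - exact: ub (mPk k) (fun _ h => h).
    - exact: lb (mAP k) (@subIsetr _ _ _).
    - exact: ub (mAP k) (@subIsetr _ _ _).
    - by rewrite mulr_ge0 // ltW.
    - exact: ltW.
  apply: term_top => //.
  - by rewrite -lee_fin /q fineK ?finmu //; exact: probability_le1.
  - rewrite /w /v fine_le ?finmu //; first exact: mPk.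
    by apply: le_measure; rewrite ?inE //; exact: mPk.
rewrite big_ord_recr /= /c ltnn.
rewrite lerD2r.
have -> : (\sum_(i < N) (if (i < N)%N then (eps * x i)%R else v i) = \sum_(i < N) (eps * x i))%R.
  by apply: eq_bigr => i _; rewrite ltn_ord.
rewrite -mulr_sumr -[leRHS]mulr1 ler_pM2l //.
have x0 k : (0 <= x k)%R by rewrite fine_ge0.
have : ((\sum_(i < N) x i)%R <= fine (mu A))%R.
  by rewrite e3 big_ord_recr /= lerDl.
move=> /le_trans; apply.
rewrite -lee_fin fineK ?finmu //; exact: probability_le1.
Qed.

End cells.

Lemma approx_main (muT nuT : probability F R) :
  is_image_measure mu T muT -> is_image_measure nu T nuT ->
  forall delta : R, (0 < delta)%R ->
  exists n D (H : ppart n D) (Q : nat -> probability E R),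
    (forall U, measurable U -> mu U = pmix Q H muT U) /\
    (forall A, measurable A -> `|pmix Q H nuT A - nu A| < delta%:E).
Proof.
move=> hm hn delta d0.
pose eps := (delta / 2)%R.
have e0 : (0 < eps)%R by rewrite divr_gt0.
have [N hN] := tail e0 e0.
have : forall k, exists C, measurable C /\ Pk eps N k = T @^-1` C.
  by move=> k; have [C mC e] := gsuf (mGc eps N k); exists C.
move=> /choice [C hC].
have mC k : measurable (C k) by case: (hC k).
have PkC k : Pk eps N k = T @^-1` C k by case: (hC k).
exists N.+1, (Dc N C), (Dc_ppart N mC), (Qk eps N); split.
  by move=> U mU; exact: cells_mu.
move=> A mA; apply: le_lt_trans (cells_nu e0 mC PkC hn mA) _.
have PN : Pk eps N N = Fge (N%:R * eps) by rewrite /Pk /Gc ltnn eqxx.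
rewrite PN lte_fin.
have : (fine (nu (Fge (N%:R * eps))) < eps)%R.
  by rewrite -lte_fin fineK ?finmu //; exact: mFge.
move=> h; rewrite [X in (_ < X)%R](splitr delta) -/eps ltrD2l //.
Qed.

End approx.

Unset Implicit Arguments.
Set Strict Implicit.
Set Printing Implicit Defensive.
Local Close Scope ereal_scope.
Local Close Scope ring_scope.
Local Close Scope classical_set_scope.
Local Open Scope classical_set_scope.
Local Open Scope ereal_scope.

Theorem proposition4p3 (R : realType) (alpha : divergence_fun R)
  (d d' : measure_display) (E : measurableType d) (F : measurableType d')
  (mu nu : probability E R) (T : E -> F) (muT nuT : probability F R) :
  is_divergence alpha ->
  @is_polish R d E -> @is_polish R d' F ->
  nu `<< mu ->
  measurable_fun [set: E] T ->
  is_image_measure mu T muT -> is_image_measure nu T nuT ->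
  (sufficient T mu nu -> alpha d' F nuT muT = alpha d E nu mu) /\
  ((exists S : F -> E, [/\ measurable_fun [set: F] S, cancel T S & cancel S T]) ->
     alpha d' F nuT muT = alpha d E nu mu).
Proof.
move=> Hal pE pF numu mT hm hn.
have fwd : alpha d' F nuT muT <= alpha d E nu mu := dp_fun Hal pE pF mT hm hn.
split.
- move=> [g [g0 gsuf gdens]].
  apply/le_anti; rewrite fwd /=.
  have [Hd _] := Hal.
  have [b0 _ lsc _ _] := Hd d' F pF muT.
  have [_ _ lscE _ _] := Hd d E pE mu.
  rewrite leNgt; apply/negP => hlt.
  have bfin : alpha d' F nuT muT \is a fin_num.
    by rewrite ge0_fin_numE ?b0 //; exact: lt_le_trans hlt (leey _).
  have hfb : (fine (alpha d' F nuT muT))%:E < alpha d E nu mu by rewrite fineK.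
  have [delta d0 hd] := lscE nu (fine (alpha d' F nuT muT)) hfb.
  have [n [D [H [Q [hmu hnu]]]]] := approx_main mT g0 gsuf gdens numu hm hn d0.
  have h1 := hd (pmix Q H nuT) hnu.
  have h2 : alpha d E (pmix Q H nuT) mu <= alpha d' F nuT muT := dp_mix Hal pE pF nuT hmu.
  by move: (lt_le_trans h1 h2); rewrite fineK // ltxx.
- move=> [S [mS TS ST]].
  apply/le_anti; rewrite fwd /=.
  have mpre B : measurable B -> measurable (S @^-1` B).
    by move=> mB; rewrite -[X in measurable X]setTI; exact: mS.
  apply: (dp_fun Hal pF pE mS).
  + move=> B mB; rewrite hm; last exact: mpre.
    by congr (mu _); apply/seteqP; split => x; rewrite /preimage /= TS.
  + move=> B mB; rewrite hn; last exact: mpre.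
    by congr (nu _); apply/seteqP; split => x; rewrite /preimage /= TS.
Qed.
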